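(* Let $L_1=U\oplus A_2$ with $\mathbb{Z}$-basis $e_1,\dots,e_4$ and Gram matrix $$\begin{pmatrix}0&1&0&0\\1&0&0&0\\0&0&-2&-1\\0&0&-1&-2\end{pmatrix}.$$ Let $v_1=(1,-1,0,0)$, $v_2=(0,0,-1,0)$, $v_3=(0,0,0,1)$, $v_4=(0,1,1,-1)$ (coordinates in this basis). Then $\operatorname{O}^+(L_1)$ is generated by the reflections $\sigma_{v_1},\sigma_{v_2},\sigma_{v_3},\sigma_{v_4}$ together with the isometry $(x_1,x_2,x_3,x_4)\mapsto(x_1,x_2,-x_4,-x_3)$.
   Context: For a non-isotropic vector $w$, $\sigma_w(x)=x-\frac{2(x,w)}{(w,w)}w$. The real spinor norm of $g=\sigma_{w_1}\cdots\sigma_{w_m}\in\operatorname{O}(L_1\otimes\mathbb{R})$ is $\prod_i(-(w_i,w_i)/2)\in\mathbb{R}^*/(\mathbb{R}^* )^2$, and $\operatorname{O}^+(L_1)$ is the subgroup of $\operatorname{O}(L_1)$ of elements with real spinor norm $1$ (for this Lorentzian lattice, equivalently those preserving each component of the cone of positive vectors). *)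

(* Defs.v *)
From HB Require Import structures.
From mathcomp Require Import all_boot all_order all_algebra.
From mathcomp Require Import reals.
Set Implicit Arguments. Unset Strict Implicit. Unset Printing Implicit Defensive.
Import Order.TTheory GRing.Theory Num.Theory.
Local Open Scope ring_scope.

(* Convention: vectors are ROW vectors 'rV_4 (coordinates in e1..e4); a linear
   map x |-> x *m g is represented by the matrix g. *)

Definition gram_entry (i j : nat) : int :=
  match i, j with
  | 0, 1 | 1, 0 => 1
  | 2, 2 | 3, 3 => -2
  | 2, 3 | 3, 2 => -1
  | _, _ => 0
  end.

Definition Gram : 'M[int]_4 := \matrix_(i < 4, j < 4) gram_entry i j.

Definition GramF (F : pzRingType) : 'M[F]_4 := map_mx (fun z : int => z%:~R) Gram.

Definition bil (F : pzRingType) (x y : 'rV[F]_4) : F := (x *m GramF F *m y^T) 0 0.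

(* matrix of the reflection sigma_w(x) = x - 2(x,w)/(w,w) w, x |-> x *m reflmx w *)
Definition reflmx (F : fieldType) (w : 'rV[F]_4) : 'M[F]_4 :=
  1%:M - (2 / bil w w) *: (GramF F *m w^T *m w).

Definition isometryL1 (g : 'M[int]_4) : bool :=
  (g \in unitmx) && (g *m Gram *m g^T == Gram).

(* real spinor norm of g equals 1: g = sigma_{w_1} ... sigma_{w_m} over R with
   prod_i (-(w_i,w_i)/2) positive (i.e. trivial modulo squares in R^x). *)
Definition real_spinor_norm_one (R : realType) (g : 'M[int]_4) : Prop :=
  exists s : seq 'rV[R]_4,
    [/\ all (fun w => bil w w != 0) s,
        map_mx (fun z : int => z%:~R) g = \prod_(w <- s) reflmx w
      & 0 < \prod_(w <- s) (- bil w w / 2)].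

Definition OplusL1 (R : realType) (g : 'M[int]_4) : Prop :=
  isometryL1 g /\ real_spinor_norm_one R g.

Definition is_refl_of (v : 'rV[int]_4) (g : 'M[int]_4) : Prop :=
  map_mx (fun z : int => z%:~R : rat) g = reflmx (map_mx (fun z : int => z%:~R : rat) v).

Definition rv4 (a b c d : int) : 'rV[int]_4 :=
  \row_(j < 4) nth 0 [:: a; b; c; d] j.

Definition v1 : 'rV[int]_4 := rv4 1 (-1) 0 0.
Definition v2 : 'rV[int]_4 := rv4 0 0 (-1) 0.
Definition v3 : 'rV[int]_4 := rv4 0 0 0 1.
Definition v4 : 'rV[int]_4 := rv4 0 1 1 (-1).

(* the isometry (x1,x2,x3,x4) |-> (x1,x2,-x4,-x3) as x |-> x *m swap34 *)
Definition swap34 : 'M[int]_4 :=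
  \matrix_(i < 4, j < 4)
    (if (i == j) && (i < 2)%N then 1
     else if ((i == 2%N :> nat) && (j == 3%N :> nat)) || ((i == 3%N :> nat) && (j == 2%N :> nat)) then -1
     else 0).

Definition L1_gens (g : 'M[int]_4) : Prop :=
  is_refl_of v1 g \/ is_refl_of v2 g \/ is_refl_of v3 g \/ is_refl_of v4 g \/ g = swap34.

Inductive gen_group (S : 'M[int]_4 -> Prop) : 'M[int]_4 -> Prop :=
| gen_one : gen_group S 1%:M
| gen_base g : S g -> gen_group S g
| gen_inv g : gen_group S g -> gen_group S (invmx g)
| gen_mul g h : gen_group S g -> gen_group S h -> gen_group S (g *m h).

(* Main.v *)
Require Import Defs.
From HB Require Import structures.
From mathcomp Require Import all_boot all_order all_algebra.
From mathcomp Require Import reals.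
From mathcomp Require Import ring lra zify.
Set Implicit Arguments. Unset Strict Implicit. Unset Printing Implicit Defensive.
Import Order.TTheory GRing.Theory Num.Theory.
Local Open Scope ring_scope.

Definition i0 : 'I_4 := @Ordinal 4 0 isT.
Definition i1 : 'I_4 := @Ordinal 4 1 isT.
Definition i2 : 'I_4 := @Ordinal 4 2 isT.
Definition i3 : 'I_4 := @Ordinal 4 3 isT.

Lemma sum4 (V : nmodType) (f : 'I_4 -> V) : \sum_(i < 4) f i = f i0 + f i1 + f i2 + f i3.
Proof.
rewrite !big_ord_recl big_ord0 addr0 !addrA.
congr (_ + _ + _ + _); congr f; exact: val_inj.
Qed.

Lemma ord4_cases (P : 'I_4 -> Prop) : P i0 -> P i1 -> P i2 -> P i3 -> forall j, P j.
Proof.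
move=> h0 h1 h2 h3 [[|[|[|[|k]]]] Hj] //.
- by have -> : Ordinal Hj = i0 by apply: val_inj.
- by have -> : Ordinal Hj = i1 by apply: val_inj.
- by have -> : Ordinal Hj = i2 by apply: val_inj.
- by have -> : Ordinal Hj = i3 by apply: val_inj.
Qed.

Lemma ord1_0 (i : 'I_1) : i = 0.
Proof. by apply: val_inj; case: i => [[|]]. Qed.

Lemma rowv_eq (F : Type) (x y : 'rV[F]_4) :
  x 0 i0 = y 0 i0 -> x 0 i1 = y 0 i1 -> x 0 i2 = y 0 i2 -> x 0 i3 = y 0 i3 -> x = y.
Proof.
move=> *; apply/matrixP => i j; rewrite (ord1_0 i); move: j; exact: ord4_cases.
Qed.

Lemma bilE (F : comPzRingType) (x y : 'rV[F]_4) :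
  bil x y = x 0 i0 * y 0 i1 + x 0 i1 * y 0 i0 - 2 * x 0 i2 * y 0 i2
   - x 0 i2 * y 0 i3 - x 0 i3 * y 0 i2 - 2 * x 0 i3 * y 0 i3.
Proof. rewrite /bil !mxE sum4 !mxE !sum4 !mxE /=; ring. Qed.

Lemma bilC (F : comPzRingType) (x y : 'rV[F]_4) : bil x y = bil y x.
Proof. rewrite !bilE; ring. Qed.

Lemma rv4E (a b c d : int) :
  [/\ (rv4 a b c d) 0 i0 = a, (rv4 a b c d) 0 i1 = b, (rv4 a b c d) 0 i2 = c
    & (rv4 a b c d) 0 i3 = d].
Proof. by rewrite !mxE. Qed.

Lemma cone_aux (R : realDomainType) (u u' P P' m : R) :
  P >= 0 -> P' >= 0 -> P < u ^+ 2 -> P' < u' ^+ 2 -> m ^+ 2 <= P * P' ->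
  0 < u * u' * (u * u' - m).
Proof.
move=> P0 P'0 Pu Pu' mP.
set k := u * u'.
have u'0 : 0 < u' ^+ 2 by apply: le_lt_trans Pu'.
have k2 : P * P' < k ^+ 2.
  rewrite /k exprMn; apply: (@le_lt_trans _ _ (P * u' ^+ 2)).
    by apply: ler_wpM2l => //; apply: ltW.
  by rewrite ltr_pM2r.
have kpos : 0 < k ^+ 2 by apply: le_lt_trans k2; apply: mulr_ge0.
have [km|km] := leP (k * m) 0.
  rewrite mulrBr -expr2; lra.
have : (k * m) ^+ 2 < (k ^+ 2) ^+ 2.
  rewrite exprMn; apply: (@le_lt_trans _ _ (k ^+ 2 * (P * P'))).
    by apply: ler_wpM2l => //; apply: sqr_ge0.
  by rewrite ltr_pM2l.
rewrite mulrBr -expr2 => h.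
have : k * m < k ^+ 2 by nra.
lra.
Qed.

Lemma cone (R : realDomainType) (a b c d a' b' c' d' : R) :
  0 < 2 * a * b - 2 * (c * c + c * d + d * d) ->
  0 < 2 * a' * b' - 2 * (c' * c' + c' * d' + d' * d') ->
  0 < (a + b) * (a' + b') * (a * b' + b * a' - 2 * c * c' - c * d' - d * c' - 2 * d * d').
Proof.
move=> hx hy.
pose P := (a - b) ^+ 2 + (2 * c + d) ^+ 2 + 3 * d ^+ 2.
pose P' := (a' - b') ^+ 2 + (2 * c' + d') ^+ 2 + 3 * d' ^+ 2.
pose m := (a - b) * (a' - b') + (2 * c + d) * (2 * c' + d') + 3 * d * d'.
have h := @cone_aux R (a + b) (a' + b') P P' m.
have e : P * P' - m ^+ 2 = ((a - b) * (2 * c' + d') - (2 * c + d) * (a' - b')) ^+ 2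
   + 3 * ((a - b) * d' - d * (a' - b')) ^+ 2 + 3 * ((2 * c + d) * d' - d * (2 * c' + d')) ^+ 2.
  rewrite /P /P' /m; ring.
have : 0 < (a + b) * (a' + b') * ((a + b) * (a' + b') - m).
  apply: h.
  - by rewrite /P; apply: addr_ge0; [apply: addr_ge0; apply: sqr_ge0|apply: mulr_ge0 => //; apply: sqr_ge0].
  - by rewrite /P'; apply: addr_ge0; [apply: addr_ge0; apply: sqr_ge0|apply: mulr_ge0 => //; apply: sqr_ge0].
  - rewrite /P; nra.
  - rewrite /P'; nra.
  - rewrite -subr_ge0 e; apply: addr_ge0; [apply: addr_ge0|].
    + exact: sqr_ge0.
    + by apply: mulr_ge0 => //; apply: sqr_ge0.
    + by apply: mulr_ge0 => //; apply: sqr_ge0.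
have -> : (a + b) * (a' + b') - m = 2 * (a * b' + b * a' - 2 * c * c' - c * d' - d * c' - 2 * d * d').
  rewrite /m; ring.
nra.
Qed.

Definition comp (F : pzRingType) (x : 'rV[F]_4) := x 0 i0 + x 0 i1.

Lemma vcone (R : realDomainType) (x y : 'rV[R]_4) :
  0 < bil x x -> 0 < bil y y -> 0 < comp x * comp y * bil x y.
Proof.
rewrite !bilE /comp => hx hy.
have := @cone R (x 0 i0) (x 0 i1) (x 0 i2) (x 0 i3) (y 0 i0) (y 0 i1) (y 0 i2) (y 0 i3).
have e1 : forall a b c d : R, a * b + b * a - 2 * c * c - c * d - d * c - 2 * d * d
   = 2 * a * b - 2 * (c * c + c * d + d * d) by move=> *; ring.
rewrite -!e1 => h; exact: h.
Qed.

Lemma GramF_int : GramF int = Gram.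
Proof. by apply/matrixP => i j; rewrite !mxE intz. Qed.

Lemma bil_map (F : comPzRingType) (x y : 'rV[int]_4) :
  bil (map_mx (fun z : int => z%:~R : F) x) (map_mx (fun z : int => z%:~R : F) y) = (bil x y)%:~R.
Proof.
by rewrite /bil GramF_int /GramF map_trmx -!map_mxM mxE.
Qed.

Lemma comp_map (F : pzRingType) (x : 'rV[int]_4) :
  comp (map_mx (fun z : int => z%:~R : F) x) = (comp x)%:~R.
Proof. by rewrite /comp !mxE rmorphD. Qed.

Lemma reflE (F : fieldType) (w x : 'rV[F]_4) :
  x *m reflmx w = x - (2 / bil w w * bil x w) *: w.
Proof.
rewrite /reflmx mulmxBr mulmx1 -scalemxAr !mulmxA.
by rewrite (mx11_scalar (x *m GramF F *m w^T)) mul_scalar_mx scalerA.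
Qed.

Lemma bilBl (F : comPzRingType) (x y w : 'rV[F]_4) a :
  bil (x - a *: w) y = bil x y - a * bil w y.
Proof. rewrite !bilE !mxE; ring. Qed.

Lemma bilBr (F : comPzRingType) (x y w : 'rV[F]_4) a :
  bil y (x - a *: w) = bil y x - a * bil y w.
Proof. rewrite !bilE !mxE; ring. Qed.

Lemma refl_iso (F : fieldType) (w x y : 'rV[F]_4) : bil w w != 0 ->
  bil (x *m reflmx w) (y *m reflmx w) = bil x y.
Proof.
move=> hw; rewrite !reflE bilBl !bilBr (bilC w y).
move: (bil x y) (bil y w) (bil x w) (bil w w) hw => a b c n hn; field.
by [].
Qed.

Lemma comp_sub (F : comPzRingType) (x w : 'rV[F]_4) a : comp (x - a *: w) = comp x - a * comp w.
Proof. rewrite /comp !mxE; ring. Qed.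

Lemma refl_sign (R : realFieldType) (w x : 'rV[R]_4) : bil w w != 0 -> 0 < bil x x ->
  0 < comp x * comp (x *m reflmx w) * (- bil w w / 2).
Proof.
move=> hw hx.
set y := x *m reflmx w.
have hy : 0 < bil y y by rewrite /y refl_iso.
have [wn|wp] := ltP (bil w w) 0.
  have hxy : 0 < bil x y.
    rewrite /y reflE bilBr.
    have ht : (bil w w)^-1 < 0 by rewrite invr_lt0.
    have e : 2 / bil w w * bil x w * bil x w = 2 * (bil x w * bil x w) * (bil w w)^-1 by ring.
    rewrite e; move: ht; set t := (bil w w)^-1; set p := bil x w => ht; nra.
  have := vcone hx hy; rewrite pmulr_lgt0 // => hc.
  apply: mulr_gt0 => //; lra.
have wp' : 0 < bil w w by rewrite lt_def hw wp.
have hyw : bil y w = - bil x w.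
  rewrite /y reflE bilBl; field; done.
have h1 := vcone hx wp'.
have h2 := vcone hy wp'.
rewrite hyw in h2.
move: h1 h2; set cx := comp x; set cy := comp y; set cw := comp w; set p := bil x w => h1 h2.
have h3 : 0 < - (cx * cy) * ((cw * p) ^+ 2).
  have -> : - (cx * cy) * ((cw * p) ^+ 2) = (cx * cw * p) * (cy * cw * - p) by ring.
  exact: mulr_gt0.
have hA : cx * cy < 0.
  have hs : 0 <= (cw * p) ^+ 2 by apply: sqr_ge0.
  move: h3 hs; set s := (cw * p) ^+ 2; nra.
nra.
Qed.

Lemma prod_sign (R : realFieldType) (s : seq 'rV[R]_4) (x : 'rV[R]_4) :
  all (fun w => bil w w != 0) s -> 0 < bil x x ->
  0 < comp x * comp (x *m \prod_(w <- s) reflmx w) * \prod_(w <- s) (- bil w w / 2).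
Proof.
elim: s x => [|w s IH] x /=.
  move=> _ hx; rewrite !big_nil mulr1 mulmx1.
  have := vcone hx hx; nra.
move=> /andP[hw hs] hx; rewrite !big_cons -mulmxE mulmxA.
have h1 := refl_sign hw hx.
have hy : 0 < bil (x *m reflmx w) (x *m reflmx w) by rewrite refl_iso.
have h2 := IH _ hs hy.
move: h1 h2.
set cx := comp x; set cy := comp (x *m reflmx w); set cz := comp _; set a := (- _ / 2); set b := \prod_(_ <- _) _.
move=> h1 h2.
have h3 : 0 < (cx * cy * a) * (cy * cz * b) by apply: mulr_gt0.
have hcy : 0 < cy ^+ 2.
  have := vcone hy hy; rewrite -/cy => h; rewrite expr2; nra.
have -> : cx * cz * (a * b) = ((cx * cy * a) * (cy * cz * b)) / cy ^+ 2.
  by field; apply/negP => /eqP h; move: hcy; rewrite h expr2 mul0r ltxx.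
exact: (divr_gt0 h3 hcy).
Qed.

Lemma ltr0z_ (R : realDomainType) (n : int) : (0 < (n%:~R : R)) = (0 < n).
Proof. by rewrite ltr0z. Qed.

Definition r0 : 'rV[int]_4 := rv4 1 1 0 0.
Definition rho : 'rV[int]_4 := rv4 3 4 1 (-1).

Lemma bil_rv4 (a b c d a' b' c' d' : int) :
  bil (rv4 a b c d) (rv4 a' b' c' d') = a * b' + b * a' - 2 * c * c' - c * d' - d * c' - 2 * d * d'.
Proof. by rewrite bilE !mxE. Qed.

Lemma spinor_comp (R : realType) (g : 'M[int]_4) : real_spinor_norm_one R g -> 0 < comp (r0 *m g).
Proof.
case=> s [hs hg hp].
have hx : 0 < bil (map_mx (fun z : int => z%:~R : R) r0) (map_mx (fun z : int => z%:~R : R) r0).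
  by rewrite bil_map /r0 bil_rv4.
have := prod_sign hs hx.
rewrite -hg -map_mxM !comp_map.
have -> : comp r0 = 2 by rewrite /comp !mxE.
move=> h.
have h2 : 0 < ((comp (r0 *m g))%:~R : R) * (2%:~R * \prod_(w <- s) (- bil w w / 2)).
  by move: h; rewrite mulrCA mulrA.
have h3 : 0 < (2%:~R : R) * \prod_(w <- s) (- bil w w / 2) by apply: mulr_gt0 => //; rewrite ltr0z.
by rewrite -(ltr0z_ R); move: h2; rewrite (pmulr_lgt0 _ h3).
Qed.

Lemma mx_ext (F : pzRingType) (A B : 'M[F]_4) : (forall x : 'rV[F]_4, x *m A = x *m B) -> A = B.
Proof. by move=> h; apply/row_matrixP => i; rewrite !rowE h. Qed.

Definition Sv (v : 'rV[int]_4) : 'M[int]_4 := 1%:M + Gram *m v^T *m v.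

Lemma SvE (v x : 'rV[int]_4) : x *m Sv v = x + bil x v *: v.
Proof.
rewrite /Sv mulmxDr mulmx1 !mulmxA /bil GramF_int.
by rewrite -mul_scalar_mx -mx11_scalar.
Qed.

Lemma bilDl (F : comPzRingType) (x y w : 'rV[F]_4) a :
  bil (x + a *: w) y = bil x y + a * bil w y.
Proof. rewrite !bilE !mxE; ring. Qed.

Lemma bilDr (F : comPzRingType) (x y w : 'rV[F]_4) a :
  bil y (x + a *: w) = bil y x + a * bil y w.
Proof. rewrite !bilE !mxE; ring. Qed.

Lemma Sv_iso (v x y : 'rV[int]_4) : bil v v = -2 -> bil (x *m Sv v) (y *m Sv v) = bil x y.
Proof. move=> hv; rewrite !SvE bilDl !bilDr hv (bilC v y); ring. Qed.

Lemma Sv_inv (v : 'rV[int]_4) : bil v v = -2 -> Sv v *m Sv v = 1%:M.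
Proof.
move=> hv; apply: mx_ext => x; rewrite mulmxA !SvE bilDl hv mulmx1.
rewrite -addrA -scalerDl.
have -> : bil x v + (bil x v + bil x v * -2) = 0 by ring.
by rewrite scale0r addr0.
Qed.

Lemma iso_bil (g : 'M[int]_4) (x y : 'rV[int]_4) : g *m Gram *m g^T = Gram ->
  bil (x *m g) (y *m g) = bil x y.
Proof.
move=> hg; rewrite /bil GramF_int trmx_mul !mulmxA.
by rewrite -(mulmxA x g Gram) -(mulmxA x (g *m Gram) g^T) hg.
Qed.

Lemma delta_ij (F : pzRingType) (A : 'M[F]_4) i j :
  (delta_mx (0 : 'I_1) i *m A *m (delta_mx (0 : 'I_1) j)^T) 0 0 = A i j.
Proof.
by rewrite trmx_delta -(rowE i A) -(colE j (row i A)) !mxE.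
Qed.

Lemma iso_of_vec (M : 'M[int]_4) :
  (forall x y, bil (x *m M) (y *m M) = bil x y) -> M *m Gram *m M^T = Gram.
Proof.
move=> h; apply/matrixP => i j.
have := h (delta_mx 0 i) (delta_mx 0 j).
rewrite /bil GramF_int trmx_mul !mulmxA -(mulmxA _ M Gram) -(mulmxA _ (M *m Gram) M^T).
by rewrite !delta_ij.
Qed.

Lemma Sv_mat (v : 'rV[int]_4) : bil v v = -2 -> Sv v *m Gram *m (Sv v)^T = Gram.
Proof. by move=> hv; apply: iso_of_vec => x y; apply: Sv_iso. Qed.

Lemma swapE (F : pzRingType) (x : 'rV[F]_4) (y := x *m map_mx (fun z : int => z%:~R : F) swap34) :
  [/\ y 0 i0 = x 0 i0, y 0 i1 = x 0 i1, y 0 i2 = - x 0 i3 & y 0 i3 = - x 0 i2].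
Proof.
rewrite /y !mxE !sum4 !mxE /= ?mulr0z ?mulrN1z.
by rewrite !mulr0 ?mulr1 ?mulrN1 ?addr0 ?add0r.
Qed.

Lemma map_int_id (m n : nat) (A : 'M[int]_(m, n)) : map_mx (fun z : int => z%:~R : int) A = A.
Proof. by apply/matrixP => i j; rewrite mxE intz. Qed.

Lemma swap_int (x : 'rV[int]_4) :
  x *m swap34 = rv4 (x 0 i0) (x 0 i1) (- x 0 i3) (- x 0 i2).
Proof.
have [h0 h1 h2 h3] := swapE x; rewrite map_int_id in h0 h1 h2 h3.
by apply: rowv_eq; rewrite ?h0 ?h1 ?h2 ?h3 mxE.
Qed.

Lemma swap_inv : swap34 *m swap34 = 1%:M.
Proof.
apply: mx_ext => x; rewrite mulmxA !swap_int mulmx1.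
by apply: rowv_eq; rewrite !mxE /= ?opprK.
Qed.

Lemma swap_mat : swap34 *m Gram *m swap34^T = Gram.
Proof.
apply: iso_of_vec => x y; rewrite !swap_int bil_rv4 bilE; ring.
Qed.

Lemma Sv_refl (F : numFieldType) (v : 'rV[int]_4) : bil v v = -2 ->
  map_mx (fun z : int => z%:~R : F) (Sv v) = reflmx (map_mx (fun z : int => z%:~R : F) v).
Proof.
move=> hv; rewrite /reflmx bil_map hv /Sv map_mxD map_mx1 !map_mxM map_trmx.
have -> : 2 / ((-2)%:~R : F) = -1.
  have -> : ((-2)%:~R : F) = -2 by rewrite rmorphN.
  by field.
by rewrite scaleNr scale1r opprK /GramF.
Qed.

Lemma swap_refl (F : numFieldType) :
  map_mx (fun z : int => z%:~R : F) swap34 = reflmx (map_mx (fun z : int => z%:~R : F) (rv4 0 0 1 1)).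
Proof.
apply: mx_ext => x; rewrite reflE bil_map (_ : bil (rv4 0 0 1 1) _ = -6); last by rewrite bil_rv4.
have -> : ((-6)%:~R : F) = -6 by rewrite rmorphN.
have [h0 h1 h2 h3] := swapE x.
by apply: rowv_eq; rewrite ?h0 ?h1 ?h2 ?h3 !mxE /= bilE !mxE /= ?mulr0z ?rmorphN ?mulr1z; field.
Qed.

Lemma sol3 (a c d : int) : a - c + d = -1 -> a * a + c * c + c * d + d * d = 1 ->
  (a = 0 /\ c = 1 /\ d = 0) \/ (a = 0 /\ c = 0 /\ d = -1) \/ (a = -1 /\ c = 0 /\ d = 0).
Proof.
move=> h1 h2.
have e : 4 * (c * c + c * d + d * d) = (2 * c + d) * (2 * c + d) + 3 * (d * d) by ring.
have q1 := sqr_ge0 (2 * c + d); rewrite expr2 in q1.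
have q2 := sqr_ge0 d; rewrite expr2 in q2.
have q3 := sqr_ge0 a; rewrite expr2 in q3.
have hd : d * d <= 1 by lia.
have ha : a * a <= 1 by lia.
have : a = -1 \/ a = 0 \/ a = 1 by nia.
have : d = -1 \/ d = 0 \/ d = 1 by nia.
have hc : c = a + d + 1 by lia.
subst c.
case=> [hd'|[hd'|hd']]; case=> [ha'|[ha'|ha']]; rewrite hd' ha' in h2 *; lia.
Qed.

Lemma rv4_eta (x : 'rV[int]_4) : x = rv4 (x 0 i0) (x 0 i1) (x 0 i2) (x 0 i3).
Proof. by apply: rowv_eq; rewrite !mxE. Qed.

Lemma vec_sol (z : 'rV[int]_4) : bil z r0 = 0 -> bil z rho = -1 -> bil z z = -2 ->
  z = rv4 0 0 1 0 \/ z = rv4 0 0 0 (-1) \/ z = rv4 (-1) 1 0 0.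
Proof.
rewrite (rv4_eta z) /r0 /rho !bil_rv4.
move: (z 0 i0) (z 0 i1) (z 0 i2) (z 0 i3) => a b c d h1 h2 h3.
have hb : b = - a by lia.
subst b.
have := @sol3 a c d.
case.
- lia.
- lia.
- by move=> [? [? ?]]; left; congr rv4; lia.
- by case=> [[? [? ?]]|[? [? ?]]]; right; [left|right]; congr rv4; lia.
Qed.

Lemma vec_sol' (z : 'rV[int]_4) : bil z r0 = 0 -> bil z rho = 1 -> bil z z = -2 ->
  z = rv4 0 0 0 1 \/ z = rv4 0 0 (-1) 0 \/ z = rv4 1 (-1) 0 0.
Proof.
rewrite (rv4_eta z) /r0 /rho !bil_rv4.
move: (z 0 i0) (z 0 i1) (z 0 i2) (z 0 i3) => a b c d h1 h2 h3.
have hb : b = - a by lia.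
subst b.
have := @sol3 (- a) (- c) (- d).
case.
- lia.
- lia.
- by move=> [? [? ?]]; right; left; congr rv4; lia.
- by case=> [[? [? ?]]|[? [? ?]]]; [left|right; right]; congr rv4; lia.
Qed.

Lemma mat_basis (A B : 'M[int]_4) :
  rv4 1 0 0 0 *m A = rv4 1 0 0 0 *m B -> rv4 0 1 0 0 *m A = rv4 0 1 0 0 *m B ->
  rv4 0 0 1 0 *m A = rv4 0 0 1 0 *m B -> rv4 0 0 0 1 *m A = rv4 0 0 0 1 *m B -> A = B.
Proof.
move=> h1 h2 h3 h4; apply/row_matrixP; apply: ord4_cases; rewrite !rowE.
- by have -> : delta_mx 0 i0 = rv4 1 0 0 0 by apply: rowv_eq; rewrite !mxE.
- by have -> : delta_mx 0 i1 = rv4 0 1 0 0 by apply: rowv_eq; rewrite !mxE.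
- by have -> : delta_mx 0 i2 = rv4 0 0 1 0 by apply: rowv_eq; rewrite !mxE.
- by have -> : delta_mx 0 i3 = rv4 0 0 0 1 by apply: rowv_eq; rewrite !mxE.
Qed.

Lemma gen_Sv (v : 'rV[int]_4) : bil v v = -2 -> is_refl_of v (Sv v).
Proof. exact: Sv_refl. Qed.

Lemma gens1 : L1_gens (Sv v1). Proof. by left; apply: gen_Sv; rewrite bil_rv4. Qed.
Lemma gens2 : L1_gens (Sv v2). Proof. by right; left; apply: gen_Sv; rewrite bil_rv4. Qed.
Lemma gens3 : L1_gens (Sv v3). Proof. by right; right; left; apply: gen_Sv; rewrite bil_rv4. Qed.
Lemma gens4 : L1_gens (Sv v4). Proof. by right; right; right; left; apply: gen_Sv; rewrite bil_rv4. Qed.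
Lemma gens5 : L1_gens swap34. Proof. by right; right; right; right. Qed.

Lemma stab (g : 'M[int]_4) : g *m Gram *m g^T = Gram -> r0 *m g = r0 -> rho *m g = rho ->
  gen_group L1_gens g.
Proof.
move=> hg hr hrho.
have hz1 : bil (rv4 0 0 1 0 *m g) r0 = 0 by rewrite -hr iso_bil // bil_rv4.
have hz2 : bil (rv4 0 0 1 0 *m g) rho = -1 by rewrite -hrho iso_bil // bil_rv4.
have hz3 : bil (rv4 0 0 1 0 *m g) (rv4 0 0 1 0 *m g) = -2 by rewrite iso_bil // bil_rv4.
have hw1 : bil (rv4 0 0 0 1 *m g) r0 = 0 by rewrite -hr iso_bil // bil_rv4.
have hw2 : bil (rv4 0 0 0 1 *m g) rho = 1 by rewrite -hrho iso_bil // bil_rv4.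
have hw3 : bil (rv4 0 0 0 1 *m g) (rv4 0 0 0 1 *m g) = -2 by rewrite iso_bil // bil_rv4.
have hzw : bil (rv4 0 0 1 0 *m g) (rv4 0 0 0 1 *m g) = -1 by rewrite iso_bil // bil_rv4.
have he1 : rv4 1 0 0 0 *m g = 4 *: r0 - rho + rv4 0 0 1 0 *m g - rv4 0 0 0 1 *m g.
  rewrite (_ : rv4 1 0 0 0 = 4 *: r0 - rho + rv4 0 0 1 0 - rv4 0 0 0 1); last first.
    by apply: rowv_eq; rewrite !mxE /=.
  by rewrite !mulmxDl !mulNmx -scalemxAl hr hrho.
have he2 : rv4 0 1 0 0 *m g = rho - 3 *: r0 - rv4 0 0 1 0 *m g + rv4 0 0 0 1 *m g.
  rewrite (_ : rv4 0 1 0 0 = rho - 3 *: r0 - rv4 0 0 1 0 + rv4 0 0 0 1); last first.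
    by apply: rowv_eq; rewrite !mxE /=.
  by rewrite !mulmxDl !mulNmx -scalemxAl hr hrho.
have := vec_sol hz1 hz2 hz3; have := vec_sol' hw1 hw2 hw3.
case=> [ew|[ew|ew]]; case=> [ez|[ez|ez]]; rewrite ew ez in he1 he2 hzw; rewrite bil_rv4 in hzw;
  try (exfalso; lia).
- have -> : g = 1%:M.
    apply: mat_basis; rewrite ?mulmx1 ?he1 ?he2 ?ew ?ez //;
    by apply: rowv_eq; rewrite /r0 /rho !mxE /=; lia.
  exact: gen_one.
- have -> : g = swap34.
    apply: mat_basis; rewrite swap_int ?he1 ?he2 ?ew ?ez //;
    by apply: rowv_eq; rewrite /r0 /rho !mxE /=; lia.
  exact/gen_base/gens5.
Qed.
Lemma dio1 (a b c d : int) : 0 <= - a + b -> 0 <= 2 * c + d -> 0 <= - c - 2 * d -> 0 <= a - c + d ->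
  a * b + b * a - 2 * c * c - c * d - d * c - 2 * d * d = 2 -> 0 < a + b ->
  [/\ a = 1, b = 1, c = 0 & d = 0].
Proof.
move=> h1 h2 h3 h4 e h5.
have hd : d <= 0 by lia.
have hc : 0 <= c by lia.
have ha : 0 <= a by lia.
have hab : a * a <= a * b by nia.
have hce : c * d = 0 by nia.
have [c0|c0] : c = 0 \/ d = 0 by lia.
  subst c; have d0 : d = 0 by lia. subst d.
  have : a * b = 1 by lia.
  move=> hab1; have a1 : a = 1 by nia.
  subst a; split; lia.
subst d; have : c = 0 by lia. move=> ?; subst c.
have : a * b = 1 by lia.
move=> hab1; have a1 : a = 1 by nia.
subst a; split; lia.
Qed.
Lemma dio2 (a b c d : int) : a + b = 7 -> 0 <= - a + b -> 0 <= 2 * c + d -> 0 <= - c - 2 * d ->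
  a * b + b * a - 2 * c * c - c * d - d * c - 2 * d * d = 22 ->
  [/\ a = 3, b = 4, c = 1 & d = -1].
Proof.
move=> h1 h2 h3 h4 e.
have hb : b = 7 - a by lia.
subst b.
have hd : d <= 0 by lia.
have hc : 0 <= c by lia.
have hX : 0 <= c * c + c * d + d * d by nia.
have ha : a * (7 - a) >= 11 by lia.
have ha3 : a = 3 by nia.
subst a.
have hX1 : c * c + c * d + d * d = 1 by lia.
have hd2 : d * d <= 1 by nia.
have : d = -1 \/ d = 0 by nia.
case=> hd'; subst d.
- have : c = 0 \/ c = 1 by nia.
  case=> hc'; subst c; [lia|split; lia].
- have hc0 : c = 0 by lia. subst c. lia.
Qed.

Lemma iso_mul (g h : 'M[int]_4) : g *m Gram *m g^T = Gram -> h *m Gram *m h^T = Gram ->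
  (g *m h) *m Gram *m (g *m h)^T = Gram.
Proof.
move=> hg hh; rewrite trmx_mul !mulmxA -(mulmxA g h Gram) -(mulmxA g (h *m Gram) h^T) hh.
by rewrite hg.
Qed.

Lemma comp_bil (x : 'rV[int]_4) : comp x = bil x r0.
Proof. rewrite /comp bilE /r0 !mxE /=; ring. Qed.

Lemma Sv_back (g : 'M[int]_4) v : bil v v = -2 -> g *m Sv v *m Sv v = g.
Proof. by move=> hv; rewrite -mulmxA Sv_inv // mulmx1. Qed.

Lemma bilDl_int (x y w : 'rV[int]_4) a : bil (x + a *: w) y = bil x y + a * bil w y.
Proof. exact: bilDl. Qed.
Lemma bilDr_int (x y w : 'rV[int]_4) a : bil y (x + a *: w) = bil y x + a * bil y w.
Proof. exact: bilDr. Qed.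

Lemma vcone_int (x y : 'rV[int]_4) : 0 < bil x x -> 0 < bil y y -> 0 < comp x * comp y * bil x y.
Proof. exact: (@vcone int x y). Qed.

Lemma descent2 (n : nat) (g : 'M[int]_4) : g *m Gram *m g^T = Gram -> r0 *m g = r0 ->
  bil (rho *m g) rho <= n%:Z -> gen_group L1_gens g.
Proof.
elim: n g => [|n IH] g hg hr hn.
  have hc : comp (rho *m g) = 7 by rewrite comp_bil -hr iso_bil // bil_rv4.
  have := @vcone_int (rho *m g) rho; rewrite iso_bil // bil_rv4 hc /comp !mxE /=.
  move=> h; have h0 := h isT isT; exfalso; lia.
have hc : comp (rho *m g) = 7 by rewrite comp_bil -hr iso_bil // bil_rv4.
have step : forall v, bil v v = -2 -> bil v rho = 1 -> bil v r0 = 0 -> L1_gens (Sv v) ->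
    bil (rho *m g) v < 0 -> gen_group L1_gens g.
  move=> v hv hvr hv0 hgen hneg.
  rewrite -(Sv_back g hv); apply: gen_mul; last exact: gen_base.
  apply: IH.
  - by apply: iso_mul => //; apply: Sv_mat.
  - by rewrite mulmxA hr SvE (bilC r0 v) hv0 scale0r addr0.
  - rewrite mulmxA SvE bilDl_int hvr.
    have h1 : 0 < bil (rho *m g *m Sv v) rho.
      have hrS : r0 *m g *m Sv v = r0 by rewrite hr SvE (bilC r0 v) hv0 scale0r addr0.
      have hc1 : comp (rho *m g *m Sv v) = 7.
        by rewrite comp_bil -hrS Sv_iso // iso_bil // bil_rv4.
      have := @vcone_int (rho *m g *m Sv v) rho.
      rewrite Sv_iso // iso_bil // bil_rv4 hc1 /comp !mxE /= => h.
      have h0 := h isT isT; lia.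
    move: h1; rewrite SvE bilDl_int hvr; lia.
have [h1|h1] := ltP (bil (rho *m g) v1) 0.
  by apply: (step v1) => //; [rewrite bil_rv4|rewrite bil_rv4|rewrite bil_rv4|exact: gens1].
have [h2|h2] := ltP (bil (rho *m g) v2) 0.
  by apply: (step v2) => //; [rewrite bil_rv4|rewrite bil_rv4|rewrite bil_rv4|exact: gens2].
have [h3|h3] := ltP (bil (rho *m g) v3) 0.
  by apply: (step v3) => //; [rewrite bil_rv4|rewrite bil_rv4|rewrite bil_rv4|exact: gens3].
apply: stab => //.
have hzz : bil (rho *m g) (rho *m g) = 22 by rewrite iso_bil // bil_rv4.
move: h1 h2 h3 hzz hc; rewrite (rv4_eta (rho *m g)) /v1 /v2 /v3 !bil_rv4 /comp.
move: ((rho *m g) 0 i0) ((rho *m g) 0 i1) ((rho *m g) 0 i2) ((rho *m g) 0 i3) => a b c d.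
rewrite !mxE /= => h1 h2 h3 hzz hc.
have [-> -> -> ->] := @dio2 a b c d ltac:(lia) ltac:(lia) ltac:(lia) ltac:(lia) ltac:(lia).
by [].
Qed.

Lemma descent1 (n : nat) (g : 'M[int]_4) : g *m Gram *m g^T = Gram -> 0 < comp (r0 *m g) ->
  bil (r0 *m g) rho <= n%:Z -> gen_group L1_gens g.
Proof.
have hyy : forall h : 'M[int]_4, h *m Gram *m h^T = Gram -> bil (r0 *m h) (r0 *m h) = 2.
  by move=> h hh; rewrite iso_bil // bil_rv4.
have pos : forall h : 'M[int]_4, h *m Gram *m h^T = Gram -> 0 < comp (r0 *m h) ->
    0 < bil (r0 *m h) rho.
  have crho : comp rho = 7 by rewrite /comp !mxE.
  move=> h hh hc; have := @vcone_int (r0 *m h) rho; rewrite hyy // bil_rv4 crho => h0.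
  have h1 := h0 isT isT; move: h1 hc; set c := comp _; nia.
elim: n g => [|n IH] g hg hc hn.
  by have := pos g hg hc => ?; exfalso; lia.
have step : forall v, bil v v = -2 -> bil v rho = 1 -> L1_gens (Sv v) ->
    bil (r0 *m g) v < 0 -> gen_group L1_gens g.
  move=> v hv hvr hgen hneg.
  have hg1 : (g *m Sv v) *m Gram *m (g *m Sv v)^T = Gram by apply: iso_mul => //; apply: Sv_mat.
  have hy1 : r0 *m (g *m Sv v) = r0 *m g + bil (r0 *m g) v *: v by rewrite mulmxA SvE.
  have hc1 : 0 < comp (r0 *m (g *m Sv v)).
    have := @vcone_int (r0 *m g) (r0 *m (g *m Sv v)).
    rewrite hyy // hyy // [X in bil _ X]hy1 bilDr_int hyy // => h0.
    have h1 := h0 isT isT.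
    have hsq : 0 < 2 + bil (r0 *m g) v * bil (r0 *m g) v by nia.
    move: h1 hsq hc; set a := comp (r0 *m g); set b := comp _; set e := _ + _; nia.
  rewrite -(Sv_back g hv); apply: gen_mul; last exact: gen_base.
  apply: IH => //.
  have := pos _ hg1 hc1; rewrite hy1 bilDl_int hvr; lia.
have [h1|h1] := ltP (bil (r0 *m g) v1) 0.
  by apply: (step v1) => //; [rewrite bil_rv4|rewrite bil_rv4|exact: gens1].
have [h2|h2] := ltP (bil (r0 *m g) v2) 0.
  by apply: (step v2) => //; [rewrite bil_rv4|rewrite bil_rv4|exact: gens2].
have [h3|h3] := ltP (bil (r0 *m g) v3) 0.
  by apply: (step v3) => //; [rewrite bil_rv4|rewrite bil_rv4|exact: gens3].
have [h4|h4] := ltP (bil (r0 *m g) v4) 0.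
  by apply: (step v4) => //; [rewrite bil_rv4|rewrite bil_rv4|exact: gens4].
have hr : r0 *m g = r0.
  have hzz := hyy g hg.
  move: h1 h2 h3 h4 hzz hc; rewrite (rv4_eta (r0 *m g)) /v1 /v2 /v3 /v4 !bil_rv4 /comp.
  move: ((r0 *m g) 0 i0) ((r0 *m g) 0 i1) ((r0 *m g) 0 i2) ((r0 *m g) 0 i3) => a b c d.
  rewrite !mxE /= => h1 h2 h3 h4 hzz hc.
  have [-> -> -> ->] := @dio1 a b c d ltac:(lia) ltac:(lia) ltac:(lia) ltac:(lia) ltac:(lia) ltac:(lia).
  by [].
apply: (@descent2 `|bil (rho *m g) rho|%N) => //.
by rewrite abszE ler_norm.
Qed.

Lemma refl_inv (F : fieldType) (w : 'rV[F]_4) : bil w w != 0 -> reflmx w *m reflmx w = 1%:M.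
Proof.
move=> hw; apply: mx_ext => x; rewrite mulmxA !reflE mulmx1 bilBl.
rewrite -addrA -!scaleNr -scalerDl [X in X *: w](_ : _ = 0) ?scale0r ?addr0 //.
by field.
Qed.

Lemma prod_rev (F : fieldType) (s : seq 'rV[F]_4) : all (fun w => bil w w != 0) s ->
  (\prod_(w <- s) reflmx w) *m (\prod_(w <- rev s) reflmx w) = 1%:M.
Proof.
elim: s => [|w s IH] /=.
  by rewrite !big_nil mulmx1.
move=> /andP[hw hs].
rewrite rev_cons -cats1 big_cat big_cons big_seq1 /= -!mulmxE.
by rewrite -mulmxA (mulmxA _ _ (reflmx w)) IH // mul1mx refl_inv.
Qed.

Lemma Sv_of_refl (v : 'rV[int]_4) (g : 'M[int]_4) : bil v v = -2 -> is_refl_of v g -> g = Sv v.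
Proof.
move=> hv h; have := gen_Sv hv; rewrite /is_refl_of -h => /matrixP e.
apply/matrixP => i j; have := e i j; rewrite !mxE => /(@intr_inj rat) -> //.
Qed.

Lemma spinor_refl (R : realType) (v : 'rV[int]_4) : bil v v = -2 -> real_spinor_norm_one R (Sv v).
Proof.
move=> hv; exists [:: map_mx (fun z : int => z%:~R : R) v]; split.
- by rewrite /= bil_map hv andbT rmorphN /= oppr_eq0 pnatr_eq0.
- by rewrite big_seq1 Sv_refl.
- rewrite big_seq1 bil_map hv rmorphN /= opprK; lra.
Qed.

Lemma spinor_swap (R : realType) : real_spinor_norm_one R swap34.
Proof.
have hb : bil (rv4 0 0 1 1) (rv4 0 0 1 1) = -6 by rewrite bil_rv4.
exists [:: map_mx (fun z : int => z%:~R : R) (rv4 0 0 1 1)]; split.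
- by rewrite /= bil_map hb andbT rmorphN /= oppr_eq0 pnatr_eq0.
- by rewrite big_seq1 swap_refl.
- rewrite big_seq1 bil_map hb rmorphN /= opprK; lra.
Qed.

Lemma easy (R : realType) (g : 'M[int]_4) : gen_group L1_gens g -> OplusL1 R g.
Proof.
elim=> {g}.
- split.
    by rewrite /isometryL1 unitmx1 mul1mx trmx1 mulmx1 eqxx.
  exists [::]; split => //; rewrite !big_nil ?map_mx1 //; lra.
- move=> g hg.
  have [[v [hv ->]]|->] : (exists v, bil v v = -2 /\ g = Sv v) \/ g = swap34.
    have e1 : bil v1 v1 = -2 by rewrite bil_rv4.
    have e2 : bil v2 v2 = -2 by rewrite bil_rv4.
    have e3 : bil v3 v3 = -2 by rewrite bil_rv4.
    have e4 : bil v4 v4 = -2 by rewrite bil_rv4.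
    case: hg => [h|[h|[h|[h|h]]]].
    - by left; exists v1; split => //; apply: Sv_of_refl.
    - by left; exists v2; split => //; apply: Sv_of_refl.
    - by left; exists v3; split => //; apply: Sv_of_refl.
    - by left; exists v4; split => //; apply: Sv_of_refl.
    - by right.
    split; last exact: spinor_refl.
    rewrite /isometryL1 Sv_mat // eqxx andbT.
    by case: (mulmx1_unit (Sv_inv hv)).
  split; last exact: spinor_swap.
  rewrite /isometryL1 swap_mat eqxx andbT.
  by case: (mulmx1_unit swap_inv).
- move=> g _ [/andP[hu /eqP hG] [s [hs hm hp]]]; split.
    rewrite /isometryL1 unitmx_inv hu /=; apply/eqP.
    rewrite trmx_inv -{1}hG !mulmxA mulVmx // mul1mx -mulmxA mulmxV ?unitmx_tr // mulmx1 //.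
  exists (rev s); split.
  - by rewrite all_rev.
  - have hP := prod_rev hs.
    have hI : map_mx (fun z : int => z%:~R : R) (invmx g) *m map_mx (fun z : int => z%:~R : R) g = 1%:M.
      by rewrite -map_mxM mulVmx // map_mx1.
    by rewrite -[LHS]mulmx1 -hP mulmxA -hm hI mul1mx.
  - by rewrite big_rev.
- move=> g h _ [/andP[hu /eqP hG] [s [hs hm hp]]] _ [/andP[hu' /eqP hG'] [s' [hs' hm' hp']]]; split.
    by rewrite /isometryL1 unitmx_mul hu hu' /= iso_mul // eqxx.
  exists (s ++ s'); split.
  - by rewrite all_cat hs hs'.
  - by rewrite map_mxM hm hm' big_cat /= mulmxE.
  - by rewrite big_cat /=; apply: mulr_gt0.
Qed.

Theorem mainTheorem5 (R : realType) (g : 'M[int]_4) :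
  OplusL1 R g <-> gen_group L1_gens g.
Proof.
split; last exact: easy.
case=> /andP[_ /eqP hG] hs.
have hc := spinor_comp hs.
apply: (@descent1 `|bil (r0 *m g) rho|%N) => //.
by rewrite abszE ler_norm.
Qed.
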